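(* Let $(R,\mathfrak m)$ be a Cohen–Macaulay local ring with $\dim R=1$. (1) Let $I$ and $J$ be $\mathfrak m$-primary ideals of $R$ and suppose that $I$ contains an element $a$ such that $Q=(a)$ is a reduction of $I$. If $I\subseteq J\subseteq\overline I$, then $\mathrm e_1(I)\le\mathrm e_1(J)$. (2) Suppose $R$ is not a discrete valuation ring. Then $\mathrm e_1(Q:_R\mathfrak m)=\mathrm r(R)$ for every parameter ideal $Q=(a)$ of $R$.
   Context: $\overline I$ denotes the integral closure of the ideal $I$; $Q$ is a reduction of $I$ if $I^{r+1}=QI^r$ for some $r\ge0$; $Q:_R\mathfrak m=\{x\in R\mid x\mathfrak m\subseteq Q\}$. For an $\mathfrak m$-primary ideal $J$, $\mathrm e_1(J)$ is defined by $\ell_R(R/J^{n+1})=\mathrm e_0(J)\binom{n+1}{1}-\mathrm e_1(J)$ for $n\gg0$; $\mathrm r(R)=\ell_R(\mathrm{Ext}^1_R(R/\mathfrak m,R))$ is the Cohen–Macaulay type. *)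

(* Defs.v *)
From mathcomp Require Import all_boot all_order all_algebra.
Set Implicit Arguments. Unset Strict Implicit. Unset Printing Implicit Defensive.
Import Order.TTheory GRing.Theory Num.Theory.
Local Open Scope ring_scope.

Section CommAlg.
Variable R : comNzRingType.

Definition submod (V : lmodType R) (S : V -> Prop) : Prop :=
  [/\ S 0, (forall x y, S x -> S y -> S (x + y)) & (forall (a : R) x, S x -> S (a *: x))].

Definition psubset (T : Type) (A B : T -> Prop) := forall x, A x -> B x.
Definition peq (T : Type) (A B : T -> Prop) := forall x, A x <-> B x.
Definition pstrict (T : Type) (A B : T -> Prop) := psubset A B /\ exists x, B x /\ ~ A x.

Definition submod_chain (V : lmodType R) (N M : V -> Prop) (f : nat -> V -> Prop) (k : nat) :=
  [/\ peq (f 0%N) N, peq (f k) M,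
      (forall i, (i <= k)%N -> submod (f i)) &
      (forall i, (i < k)%N -> pstrict (f i) (f i.+1))].

(* the R-module M/N has length l: the supremum of lengths of chains of
   submodules between N and M is attained and equals l *)
Definition qlength_is (V : lmodType R) (N M : V -> Prop) (l : nat) :=
  (exists f, submod_chain N M f l) /\ (forall f k, submod_chain N M f k -> (k <= l)%N).

Definition is_ideal (I : R -> Prop) := @submod (R^o) I.
Definition unitideal : R -> Prop := fun _ => True.

Definition gen (s : seq R) : R -> Prop :=
  fun x => exists c : 'I_(size s) -> R, x = \sum_(i < size s) c i * s`_i.
Definition principal (a : R) : R -> Prop := fun x => exists r, x = r * a.

Definition iprod (I J : R -> Prop) : R -> Prop :=
  fun x => exists k (a b : 'I_k -> R),
    (forall i, I (a i) /\ J (b i)) /\ x = \sum_(i < k) a i * b i.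
Fixpoint ipow (I : R -> Prop) (n : nat) : R -> Prop :=
  match n with 0%N => unitideal | n'.+1 => iprod I (ipow I n') end.

Definition colon (Q I : R -> Prop) : R -> Prop := fun x => forall y, I y -> Q (x * y).
Definition radical (I : R -> Prop) : R -> Prop := fun x => exists n, I (x ^+ n).

Definition is_prime (P : R -> Prop) :=
  is_ideal P /\ ~ P 1 /\ (forall x y, P (x * y) -> P x \/ P y).
Definition is_primary (I : R -> Prop) :=
  is_ideal I /\ ~ I 1 /\ (forall x y, I (x * y) -> ~ I x -> radical I y).

Definition noetherian := forall I, is_ideal I -> exists s, peq I (gen s).
Definition local_with (m : R -> Prop) :=
  is_ideal m /\ ~ m 1 /\ (forall I, is_ideal I -> ~ I 1 -> psubset I m).

Definition prime_chain (f : nat -> R -> Prop) (k : nat) :=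
  (forall i, (i <= k)%N -> is_prime (f i)) /\ (forall i, (i < k)%N -> pstrict (f i) (f i.+1)).
Definition krull_dim_is (d : nat) :=
  (exists f, prime_chain f d) /\ (forall f k, prime_chain f k -> (k <= d)%N).

Definition regular_seq (m : R -> Prop) (s : seq R) :=
  [/\ (forall x, x \in s -> m x),
      (forall i, (i < size s)%N -> forall y, gen (take i s) (s`_i * y) -> gen (take i s) y)
    & ~ gen s 1].
Definition depth_is (m : R -> Prop) (d : nat) :=
  (exists s, size s = d /\ regular_seq m s) /\ (forall s, regular_seq m s -> (size s <= d)%N).

Definition cohen_macaulay (m : R -> Prop) :=
  exists d, krull_dim_is d /\ depth_is m d.

Definition m_primary (m I : R -> Prop) := is_primary I /\ peq (radical I) m.

Definition reduction (Q I : R -> Prop) :=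
  psubset Q I /\ exists r, peq (ipow I r.+1) (iprod Q (ipow I r)).

Definition int_closure (I : R -> Prop) : R -> Prop :=
  fun x => exists (n : nat) (c : nat -> R), (0 < n)%N /\
    (forall i, (1 <= i <= n)%N -> ipow I i (c i)) /\
    x ^+ n + \sum_(1 <= i < n.+1) c i * x ^+ (n - i) = 0.

Definition colength_is (J : R -> Prop) (l : nat) := @qlength_is (R^o) J unitideal l.

Definition e1_is (J : R -> Prop) (e : int) :=
  exists (e0 : int) (N : nat), forall n, (N <= n)%N ->
    exists l, colength_is (ipow J n.+1) l /\ (l%:Z = e0 * (n.+1)%:Z - e).

(* Ext^1_R(R/m, R), computed from the free presentation
     ... -> F_2 -> R^k --(x_1..x_k)--> R -> R/m -> 0
   where m = (x_1,...,x_k) and F_2 maps onto the syzygies of (x_i):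
   Ext^1 = Z/B with Z = {y in R^k | sum c_i y_i = 0 for all syzygies c}
   (= Hom(R^k,R) functionals killing the syzygies) and
   B = {(r x_1, ..., r x_k)} (image of Hom(R,R)). *)
Definition ext1_cycles (xs : seq R) : 'rV[R]_(size xs) -> Prop :=
  fun y => forall c : 'rV[R]_(size xs),
    \sum_(i < size xs) c 0 i * xs`_i = 0 -> \sum_(i < size xs) c 0 i * y 0 i = 0.
Definition ext1_bounds (xs : seq R) : 'rV[R]_(size xs) -> Prop :=
  fun y => exists r : R, forall i : 'I_(size xs), y 0 i = r * xs`_i.

(* Cohen-Macaulay type r(R) = l_R(Ext^1_R(R/m,R)) computed with generators xs of m *)
Definition cm_type_is (xs : seq R) (t : nat) :=
  @qlength_is _ (@ext1_bounds xs) (@ext1_cycles xs) t.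

Definition is_dvr :=
  (forall x y : R, x * y = 0 -> x = 0 \/ y = 0) /\
  (forall I, is_ideal I -> exists a, peq I (principal a)) /\
  (exists x : R, x != 0 /\ ~ (exists y, x * y = 1)).

End CommAlg.

(* Main.v *)
Require Import Defs.
From mathcomp Require Import all_boot all_order all_algebra.
From Stdlib Require Import Classical ClassicalEpsilon.
From mathcomp Require Import zify ring.
From Stdlib Require Import Lia.
Import Order.TTheory GRing.Theory Num.Theory.
Local Open Scope ring_scope.

Module Aux.
Set Implicit Arguments. Unset Strict Implicit. Unset Printing Implicit Defensive.

Section Chains.
Variable R : comNzRingType.
Variable V : lmodType R.
Implicit Types A B C X Y Z : V -> Prop.

Lemma pstrict_peq X Y X' Y' : pstrict X Y -> peq X X' -> peq Y Y' -> pstrict X' Y'.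
Proof.
move=> [s [x [Yx nXx]]] e1 e2; split.
  by move=> z /e1 /s /e2.
by exists x; split; [apply/e2 | move=> /e1].
Qed.

Lemma chain_peq X Y X' Y' f k : submod_chain X Y f k -> peq X X' -> peq Y Y' ->
  submod_chain X' Y' f k.
Proof.
move=> [h0 hk hs hst] e1 e2; split=> //.
  by move=> z; split=> [/h0/e1|/e1/h0].
by move=> z; split=> [/hk/e2|/e2/hk].
Qed.

Lemma chain_sub X Y f k : submod_chain X Y f k ->
  forall i, (i <= k)%N -> psubset (f i) Y.
Proof.
move=> [h0 hk hs hst].
suff H : forall d i, (i + d = k)%N -> psubset (f i) Y.
  by move=> i hi; apply: (H (k - i)%N); rewrite subnKC.
elim=> [|d IH] i hid.
  by rewrite addn0 in hid; subst; move=> z /hk.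
have hi : (i < k)%N by rewrite -hid addnS ltnS leq_addr.
have [s _] := hst i hi.
by move=> z /s; apply: IH; rewrite addSnnS.
Qed.

Lemma submodN X x : submod X -> X x -> X (- x).
Proof. by move=> [_ _ hZ] hx; rewrite -scaleN1r; apply: hZ. Qed.

Lemma submodB X x y : submod X -> X x -> X y -> X (x - y).
Proof. by move=> hX hx hy; have [_ hD _] := hX; apply: hD => //; apply: submodN. Qed.

Definition capP B X : V -> Prop := fun x => X x /\ B x.
Definition addP B X : V -> Prop := fun x => exists p b, X p /\ B b /\ x = p + b.

Lemma capP_submod B X : submod B -> submod X -> submod (capP B X).
Proof.
move=> [b0 bD bZ] [x0 xD xZ]; split; first by split.
  by move=> x y [? ?] [? ?]; split; auto.
by move=> a x [? ?]; split; auto.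
Qed.

Lemma addP_submod B X : submod B -> submod X -> submod (addP B X).
Proof.
move=> [b0 bD bZ] [x0 xD xZ]; split.
- by exists 0, 0; rewrite addr0.
- move=> x y [p [b [hp [hb ->]]]] [p' [b' [hp' [hb' ->]]]].
  exists (p + p'), (b + b'); do 2?split; auto.
  by rewrite addrACA.
- move=> a x [p [b [hp [hb ->]]]]; exists (a *: p), (a *: b); do 2?split; auto.
  by rewrite scalerDr.
Qed.

Lemma chain_ext X Y Z f k : submod_chain X Y f k -> pstrict Y Z -> submod Z ->
  submod_chain X Z (fun i => if (i <= k)%N then f i else Z) k.+1.
Proof.
move=> [h0 hk hs hst] hYZ hZ; split => /=.
- by [].
- by rewrite ltnn.
- by move=> i hi; case: ifP => // /hs.
- move=> i hi; rewrite ltnS in hi; rewrite hi.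
  case: (ltnP i k) => hik.
    by apply: hst.
  have ek : i = k by apply/eqP; rewrite eqn_leq hi hik.
  subst i; apply: pstrict_peq hYZ _ _ => // z; split; [apply hk|apply hk].
Qed.

Lemma chain_cat X Y Z f g k1 k2 : submod_chain X Y f k1 -> submod_chain Y Z g k2 ->
  submod_chain X Z (fun i => if (i <= k1)%N then f i else g (i - k1)%N) (k1 + k2).
Proof.
move=> [f0 fk fs fst] [g0 gk gs gst]; split => /=.
- by [].
- case: ifP => h.
    have k20 : k2 = 0%N by move: h; rewrite -{2}(addn0 k1) leq_add2l leqn0 => /eqP.
    subst k2; rewrite addn0 => z; split.
      by move=> /fk /g0 /gk.
    by move=> /gk /g0 /fk.
  by rewrite addKn.
- move=> i hi; case: ifP => h; first by apply: fs.
  by apply: gs; rewrite leq_subLR.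
- move=> i hi.
  case: (ltnP i k1) => hik.
    by rewrite (ltnW hik); apply: fst.
  case: (leqP i k1) => h2.
    have ei : i = k1 by apply/eqP; rewrite eqn_leq h2 hik.
    subst i; rewrite subSnn.
    have H : pstrict (g 0%N) (g 1%N).
      by apply: gst; rewrite -(ltn_add2l k1) addn0.
    apply: pstrict_peq H _ _ => // z; split; [move=> /g0 /fk // | move=> /fk /g0 //].
  rewrite subSn; last exact: ltnW.
  by apply: gst; rewrite ltn_subLR // ltnW.
Qed.

Lemma chain_exists X Y : submod X -> submod Y -> psubset X Y ->
  exists k f, submod_chain X Y f k.
Proof.
move=> hX hY hXY.
case: (classic (exists x, Y x /\ ~ X x)) => [hx|hn].
  exists 1%N, (fun i => if i == 0%N then X else Y); split => //=.
  - by move=> [|[|i]].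
  - by move=> [|i] //= _; split.
exists 0%N, (fun _ => X); split => //.
move=> z; split; first by apply: hXY.
by move=> hz; apply: NNPP => hz'; apply: hn; exists z.
Qed.

Lemma nat_max (P : nat -> Prop) L : (exists k, P k) -> (forall k, P k -> (k <= L)%N) ->
  exists m, P m /\ forall k, P k -> (k <= m)%N.
Proof.
elim: L P => [|L IH] P [k hk] hb.
  by exists k; split => // k' /hb; rewrite leqn0 => /eqP ->.
case: (classic (P L.+1)) => h.
  by exists L.+1; split.
apply: IH; first by exists k.
move=> k' hk'; have := hb _ hk'; rewrite leq_eqVlt => /orP [/eqP e|] //.
by subst k'.
Qed.

Lemma qlength_unique X Y l l' : qlength_is X Y l -> qlength_is X Y l' -> l = l'.
Proof.
move=> [[f hf] b] [[f' hf'] b']; apply/eqP; rewrite eqn_leq.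
by rewrite (b' _ _ hf) (b _ _ hf').
Qed.

Lemma modular_step B X Y : submod B -> submod X -> submod Y -> psubset X Y ->
  pstrict X Y -> pstrict (capP B X) (capP B Y) \/ pstrict (addP B X) (addP B Y).
Proof.
move=> hB hX hY sXY [_ [x [Yx nXx]]].
case: (classic (exists z, capP B Y z /\ ~ capP B X z)) => [[z hz]|hn].
  left; split; last by exists z.
  by move=> w [hw1 hw2]; split => //; apply: sXY.
right; split.
  move=> w [p [b [hp [hb ->]]]]; exists p, b; split; [exact: sXY | by split].
exists x; split.
  by exists x, 0; split => //; split; [case: hB | rewrite addr0].
move=> [p [b [hp [hb ex]]]].
have hbY : Y b.
  have -> : b = x - p by rewrite ex addrAC subrr add0r.
  by apply: submodB => //; apply: sXY.
have : capP B X b.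
  by apply: NNPP => nb; apply: hn; exists b; split.
move=> [hbX _]; apply: nXx; rewrite ex; case: hX => _ hD _; exact: hD.
Qed.

Lemma chain_ext' X Y Z f k : submod_chain X Y f k -> psubset Y Z -> submod Z ->
  exists k' f', [/\ (k <= k')%N, submod_chain X Z f' k' & (pstrict Y Z -> (k < k')%N)].
Proof.
move=> hf sYZ hZ.
case: (classic (pstrict Y Z)) => hs.
  by exists k.+1, (fun i => if (i <= k)%N then f i else Z); split; [exact: leqnSn | exact: chain_ext hf hs hZ | by []].
exists k, f; split => //; apply: chain_peq hf _ _ => // z; split; first exact: sYZ.
by move=> hz; apply: NNPP => nz; apply: hs; split => //; exists z.
Qed.

Lemma chain_split B g k : submod B -> (forall i, (i <= k)%N -> submod (g i)) ->
  (forall i, (i < k)%N -> pstrict (g i) (g i.+1)) ->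
  exists k1 k2 u v, (k <= k1 + k2)%N /\
    submod_chain (capP B (g 0%N)) (capP B (g k)) u k1 /\
    submod_chain (addP B (g 0%N)) (addP B (g k)) v k2.
Proof.
move=> hB; elim: k => [|k IH] hs hst.
  exists 0%N, 0%N, (fun _ => capP B (g 0%N)), (fun _ => addP B (g 0%N)).
  split => //; split; split => //.
  - by move=> i _; apply: capP_submod => //; apply: hs.
  - by move=> i _; apply: addP_submod => //; apply: hs.
have := IH (fun i hi => hs i (leqW hi)) (fun i hi => hst i (ltnW hi)).
move=> [k1 [k2 [u [v [hk [hu hv]]]]]].
have hgk : submod (g k) by apply: hs; apply: leqnSn.
have hgk1 : submod (g k.+1) by apply: hs.
have [sk _] := hst k (ltnSn k).
have sc : psubset (capP B (g k)) (capP B (g k.+1)) by move=> z [? ?]; split => //; apply: sk.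
have sa : psubset (addP B (g k)) (addP B (g k.+1)).
  by move=> z [p [b [hp [hb ->]]]]; exists p, b; split; [apply: sk|split].
have [k1' [u' [l1 hu' s1]]] := chain_ext' hu sc (capP_submod hB hgk1).
have [k2' [v' [l2 hv' s2]]] := chain_ext' hv sa (addP_submod hB hgk1).
exists k1', k2', u', v'; split => //.
case: (modular_step hB hgk hgk1 sk (hst k (ltnSn k))) => [/s1|/s2] h.
  by apply: (leq_trans _ (leq_add h l2)); rewrite addSn ltnS.
by apply: (leq_trans _ (leq_add l1 h)); rewrite addnS ltnS.
Qed.

Lemma qlength_add A B C l : submod A -> submod B -> submod C ->
  psubset A B -> psubset B C -> qlength_is A C l ->
  exists l1 l2, [/\ qlength_is A B l1, qlength_is B C l2 & (l1 + l2)%N = l].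
Proof.
move=> hA hB hC sAB sBC [[g hg] hb].
have [k2 [g2 hg2]] := chain_exists hB hC sBC.
have [k1 [g1 hg1]] := chain_exists hA hB sAB.
have [l1 [[f1 hf1] hm1]] : exists l1, (exists f, submod_chain A B f l1) /\
    forall k, (exists f, submod_chain A B f k) -> (k <= l1)%N.
  apply: (@nat_max _ l); first by exists k1, g1.
  move=> k [f hf]; apply: leq_trans (hb _ _ (chain_cat hf hg2)); exact: leq_addr.
have [l2 [[f2 hf2] hm2]] : exists l2, (exists f, submod_chain B C f l2) /\
    forall k, (exists f, submod_chain B C f k) -> (k <= l2)%N.
  apply: (@nat_max _ l); first by exists k2, g2.
  move=> k [f hf]; apply: leq_trans (hb _ _ (chain_cat hg1 hf)); exact: leq_addl.
exists l1, l2; split.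
- split; first by exists f1.
  by move=> f k hf; apply: hm1; exists f.
- split; first by exists f2.
  by move=> f k hf; apply: hm2; exists f.
apply/eqP; rewrite eqn_leq (hb _ _ (chain_cat hf1 hf2)) /=.
case: hg => [h0 hk hs hst].
have [k1' [k2' [u [v [hk' [hu hv]]]]]] := chain_split hB hs hst.
apply: leq_trans hk' _; apply: leq_add.
  apply: hm1; exists u; apply: chain_peq hu _ _.
  - move=> z; split; first by move=> [/h0 ? _].
    by move=> hz; split; [apply/h0 | apply: sAB].
  - move=> z; split; first by move=> [].
    by move=> hz; split => //; apply/hk; apply: sBC.
apply: hm2; exists v; apply: chain_peq hv _ _.
- move=> z; split.
    move=> [p [b [/h0 hp [hb' ->]]]]; case: hB => _ hD _; apply: hD => //; exact: sAB.
  by move=> hz; exists 0, z; split; [apply/h0; case: hA|split; rewrite ?add0r].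
- move=> z; split.
    move=> [p [b [/hk hp [hb' ->]]]]; case: hC => _ hD _; apply: hD => //; exact: sBC.
  by move=> hz; exists z, 0; split; [apply/hk|split; [case: hB|rewrite addr0]].
Qed.

End Chains.

Section Transport.
Variable R : comNzRingType.
Variables V W : lmodType R.
Variable f : V -> W.
Hypothesis fD : forall x y, f (x + y) = f x + f y.
Hypothesis fZ : forall (a : R) x, f (a *: x) = a *: f x.
Variables (A B : V -> Prop) (A' B' : W -> Prop).
Hypotheses (hA : submod A) (hB : submod B) (hA' : submod A') (hB' : submod B').
Hypothesis sAB : psubset A B.
Hypothesis sAB' : psubset A' B'.
Hypothesis finj : forall x y, B x -> B y -> f x = f y -> x = y.
Hypothesis fsurj : forall w, B' w -> exists x, B x /\ f x = w.
Hypothesis fimg : forall x, B x -> B' (f x).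
Hypothesis fA : forall x, B x -> (A x <-> A' (f x)).

Lemma f0 : f 0 = 0.
Proof. by rewrite -(scale0r 0) fZ scale0r. Qed.

Lemma push_chain g k : submod_chain A B g k ->
  submod_chain A' B' (fun i w => exists x, g i x /\ w = f x) k.
Proof.
move=> hg; have hsub := chain_sub hg; case: hg => [h0 hk hs hst]; split.
- move=> w; split.
    by move=> [x [/h0 hx ->]]; apply/fA => //; apply: sAB.
  move=> hw; have [x [hx ex]] := fsurj (sAB' hw).
  by exists x; split => //; apply/h0; apply/fA => //; rewrite ex.
- move=> w; split.
    by move=> [x [/hk hx ->]]; apply: fimg.
  by move=> /fsurj [x [hx ex]]; exists x; split => //; apply/hk.
- move=> i hi; have [s0 sD sZ] := hs i hi; split.
  + by exists 0; rewrite f0.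
  + move=> x y [x' [hx ->]] [y' [hy ->]]; exists (x' + y'); split; auto.
  + by move=> a x [x' [hx ->]]; exists (a *: x'); split; auto.
- move=> i hi; have [s [x [hx nx]]] := hst i hi; split.
    by move=> w [y [hy ->]]; exists y; split => //; apply: s.
  exists (f x); split; first by exists x.
  move=> [y [hy e]].
  have By : B y by apply: (hsub i) => //; apply: ltnW.
  have Bx : B x by apply: (hsub i.+1).
  by apply: nx; rewrite (finj Bx By e).
Qed.

Lemma pull_chain h k : submod_chain A' B' h k ->
  submod_chain A B (fun i x => B x /\ h i (f x)) k.
Proof.
move=> hh; have hsub := chain_sub hh; case: hh => [h0 hk hs hst]; split.
- move=> x; split.
    by move=> [bx /h0 /(fA bx)].
  by move=> ax; have bx := sAB ax; split => //; apply/h0/(fA bx).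
- move=> x; split; first by case.
  by move=> bx; split => //; apply/hk; apply: fimg.
- move=> i hi; have [s0 sD sZ] := hs i hi; have [b0 bD bZ] := hB; split.
  + by split => //; rewrite f0.
  + by move=> x y [? ?] [? ?]; split; [auto | rewrite fD; auto].
  + by move=> a x [? ?]; split; [auto | rewrite fZ; auto].
- move=> i hi; have [s [w [hw nw]]] := hst i hi; split.
    by move=> x [bx hx]; split => //; apply: s.
  have Bw : B' w by apply: (hsub i.+1).
  have [x [bx ex]] := fsurj Bw.
  by exists x; split; [split; rewrite ?ex | rewrite ex; case].
Qed.

Lemma qlength_transport l : qlength_is A' B' l -> qlength_is A B l.
Proof.
move=> [[h hh] hb]; split; first by exists (fun i x => B x /\ h i (f x)); apply: pull_chain.
by move=> g k hg; apply: (hb _ _ (push_chain hg)).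
Qed.

Lemma qlength_transport' l : qlength_is A B l -> qlength_is A' B' l.
Proof.
move=> [[g hg] hb]; split; first by exists (fun i w => exists x, g i x /\ w = f x); apply: push_chain.
by move=> h k hh; apply: (hb _ _ (pull_chain hh)).
Qed.

End Transport.

Section Ideals.
Variable R : comNzRingType.
Implicit Types I J K A B C : R -> Prop.

Lemma idealP I : is_ideal I <->
  [/\ I 0, (forall x y, I x -> I y -> I (x + y)) & (forall a x, I x -> I (a * x))].
Proof. by split; case. Qed.

Lemma ideal0 I : is_ideal I -> I 0.
Proof. by case/idealP. Qed.
Lemma idealD I x y : is_ideal I -> I x -> I y -> I (x + y).
Proof. by case/idealP => _ h _; apply: h. Qed.
Lemma ideal_mull I a x : is_ideal I -> I x -> I (a * x).
Proof. by case/idealP => _ _ h; apply: h. Qed.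
Lemma ideal_mulr I a x : is_ideal I -> I x -> I (x * a).
Proof. by move=> hI hx; rewrite mulrC; apply: ideal_mull. Qed.
Lemma idealN I x : is_ideal I -> I x -> I (- x).
Proof. by move=> hI hx; rewrite -mulN1r; apply: ideal_mull. Qed.
Lemma idealB I x y : is_ideal I -> I x -> I y -> I (x - y).
Proof. by move=> hI hx hy; apply: idealD => //; apply: idealN. Qed.

Lemma ideal_big I (T : Type) (r : seq T) (P : pred T) (F : T -> R) :
  is_ideal I -> (forall i, P i -> I (F i)) -> I (\sum_(i <- r | P i) F i).
Proof.
move=> hI hF; apply: big_ind => //; first exact: ideal0.
by move=> x y; apply: idealD.
Qed.

Lemma ideal_peq I J : is_ideal I -> peq I J -> is_ideal J.
Proof.
move=> /idealP [h0 hD hM] e; apply/idealP; split.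
- by apply/e.
- by move=> x y /e hx /e hy; apply/e; auto.
- by move=> a x /e hx; apply/e; auto.
Qed.

Lemma unitideal_ideal : @is_ideal R (@unitideal R).
Proof. by apply/idealP. Qed.

Lemma principal_ideal (a : R) : is_ideal (principal a).
Proof.
apply/idealP; split.
- by exists 0; rewrite mul0r.
- by move=> x y [r ->] [s ->]; exists (r + s); rewrite mulrDl.
- by move=> b x [r ->]; exists (b * r); rewrite mulrA.
Qed.

Lemma iprod_mem A B a b : A a -> B b -> iprod A B (a * b).
Proof.
move=> ha hb; exists 1%N, (fun _ => a), (fun _ => b); split => //.
by rewrite big_ord1.
Qed.

Lemma iprod_ideal A B : is_ideal A -> is_ideal (iprod A B).
Proof.
move=> hA; apply/idealP; split.
- by exists 0%N, (fun _ => 0), (fun _ => 0); split => [[]|]; rewrite ?big_ord0.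
- move=> x y [k1 [a1 [b1 [h1 ->]]]] [k2 [a2 [b2 [h2 ->]]]].
  exists (k1 + k2)%N,
    (fun i => match split i with inl j => a1 j | inr j => a2 j end),
    (fun i => match split i with inl j => b1 j | inr j => b2 j end).
  split.
    by move=> i; case: (split i) => j.
  rewrite big_split_ord /=; congr (_ + _); apply: eq_bigr => j _.
    by rewrite (unsplitK (inl _ j)).
  by rewrite (unsplitK (inr _ j)).
- move=> r x [k [a [b [h ->]]]]; exists k, (fun i => r * a i), b; split.
    by move=> i; have [ha hb] := h i; split => //; apply: ideal_mull.
  by rewrite mulr_sumr; apply: eq_bigr => i _; rewrite mulrA.
Qed.

Lemma iprod_least A B K : is_ideal K -> (forall a b, A a -> B b -> K (a * b)) ->
  psubset (iprod A B) K.
Proof.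
move=> hK h x [k [a [b [hab ->]]]]; apply: ideal_big => // i _.
by have [] := hab i; apply: h.
Qed.

Lemma mulcol_ideal K c : is_ideal K -> is_ideal (fun x => K (x * c)).
Proof.
move=> hK; apply/idealP; split.
- by rewrite mul0r; apply: ideal0.
- by move=> x y hx hy; rewrite mulrDl; apply: idealD.
- by move=> a x hx; rewrite -mulrA; apply: ideal_mull.
Qed.

Lemma mulrow_ideal K c : is_ideal K -> is_ideal (fun x => K (c * x)).
Proof.
move=> hK; apply: ideal_peq (mulcol_ideal c hK) _ => x.
by rewrite mulrC.
Qed.

Lemma iprod_mono A B A' B' : is_ideal A' -> psubset A A' -> psubset B B' ->
  psubset (iprod A B) (iprod A' B').
Proof.
move=> hA' sA sB; apply: iprod_least; first exact: iprod_ideal.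
by move=> a b ha hb; apply: iprod_mem; [apply: sA | apply: sB].
Qed.

Lemma iprod_comm A B : is_ideal B -> psubset (iprod A B) (iprod B A).
Proof.
move=> hB; apply: iprod_least; first exact: iprod_ideal.
by move=> a b ha hb; rewrite mulrC; apply: iprod_mem.
Qed.

Lemma iprod_assoc A B C : is_ideal A -> is_ideal B ->
  psubset (iprod (iprod A B) C) (iprod A (iprod B C)).
Proof.
move=> hA hB; apply: iprod_least; first exact: iprod_ideal.
move=> x c hx hc.
have hK : is_ideal (fun x => iprod A (iprod B C) (x * c)).
  by apply: mulcol_ideal; apply: iprod_ideal.
apply: (iprod_least hK _ hx) => a b ha hb /=.
by rewrite -mulrA; apply: iprod_mem => //; apply: iprod_mem.
Qed.

Lemma iprod_assoc' A B C : is_ideal A -> is_ideal B ->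
  psubset (iprod A (iprod B C)) (iprod (iprod A B) C).
Proof.
move=> hA hB; apply: iprod_least; first by apply: iprod_ideal; apply: iprod_ideal.
move=> a y ha hy.
have hK : is_ideal (fun y => iprod (iprod A B) C (a * y)).
  by apply: mulrow_ideal; apply: iprod_ideal; apply: iprod_ideal.
apply: (iprod_least hK _ hy) => b c hb hc /=.
by rewrite mulrA; apply: iprod_mem => //; apply: iprod_mem.
Qed.

Lemma iprod_subl A B : is_ideal A -> psubset (iprod A B) A.
Proof. by move=> hA; apply: iprod_least => // a b ha _; apply: ideal_mulr. Qed.

Lemma iprod_subr A B : is_ideal B -> psubset (iprod A B) B.
Proof. by move=> hB; apply: iprod_least => // a b _ hb; apply: ideal_mull. Qed.

Lemma iprod_unitl B : psubset B (iprod (@unitideal R) B).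
Proof. by move=> x hx; rewrite -(mul1r x); apply: iprod_mem. Qed.

Lemma iprod_unitr A : psubset A (iprod A (@unitideal R)).
Proof. by move=> x hx; rewrite -(mulr1 x); apply: iprod_mem. Qed.

Lemma ipow_ideal I n : is_ideal I -> is_ideal (ipow I n).
Proof. by move=> hI; case: n => [|n] /=; [apply: unitideal_ideal | apply: iprod_ideal]. Qed.

Lemma ipow_mono I J n : is_ideal J -> psubset I J -> psubset (ipow I n) (ipow J n).
Proof.
move=> hJ sIJ; elim: n => [|n IH] //=.
by apply: iprod_mono.
Qed.

Lemma ipow_add I p q : is_ideal I ->
  psubset (ipow I (p + q)) (iprod (ipow I p) (ipow I q)) /\
  psubset (iprod (ipow I p) (ipow I q)) (ipow I (p + q)).
Proof.
move=> hI; elim: p => [|p [IH1 IH2]].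
  rewrite add0n; split; first exact: iprod_unitl.
  by apply: iprod_subr; apply: ipow_ideal.
rewrite addSn /=; split.
  move=> x hx; apply: (iprod_assoc' (C:=ipow I q) hI (ipow_ideal p hI)).
  exact: (iprod_mono hI (fun y (hy : I y) => hy) IH1 hx).
move=> x hx; apply: (iprod_mono hI (fun y (hy : I y) => hy) IH2).
exact: (iprod_assoc hI (ipow_ideal p hI) hx).
Qed.

Lemma pow_mem I x n : I x -> ipow I n (x ^+ n).
Proof.
move=> hx; elim: n => [|n IH] //=.
by rewrite exprS; apply: iprod_mem.
Qed.

Lemma iprod_swap (X Y Z : R -> Prop) : is_ideal X -> is_ideal Y ->
  psubset (iprod X (iprod Y Z)) (iprod Y (iprod X Z)).
Proof.
move=> hX hY x hx; apply: (iprod_assoc (C:=Z) hY hX).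
apply: (iprod_mono (iprod_ideal X hY) (iprod_comm (A:=X) hY) (fun y (hy : Z y) => hy)).
exact: iprod_assoc' hx.
Qed.

Definition red I K := exists r, psubset (ipow K r.+1) (iprod I (ipow K r)).

Lemma red_pow I K r : is_ideal I -> is_ideal K ->
  psubset (ipow K r.+1) (iprod I (ipow K r)) ->
  forall n, psubset (ipow K (r + n)) (iprod (ipow I n) (ipow K r)).
Proof.
move=> hI hK hr; elim=> [|n IH].
  by rewrite addn0; apply: iprod_unitl.
have hKn := ipow_ideal n hK.
move=> x; rewrite addnS -addSn addnC => hx.
have := (ipow_add n r.+1 hK).1 _ hx => {}hx.
have := iprod_mono hKn (fun y (hy : ipow K n y) => hy) hr hx => {}hx.
have := iprod_swap hKn hI hx => {}hx.
have := iprod_mono hI (fun y (hy : I y) => hy) (ipow_add n r hK).2 hx => {}hx.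
rewrite addnC in hx.
have := iprod_mono hI (fun y (hy : I y) => hy) IH hx => {}hx.
have := iprod_assoc' hI (ipow_ideal n hI) hx.
by [].
Qed.

Lemma red_powsub I K : is_ideal I -> is_ideal K -> red I K ->
  exists c, forall n, psubset (ipow K (c + n)) (ipow I n).
Proof.
move=> hI hK [r hr]; exists r => n x /(@red_pow _ _ _ hI hK hr n _).
by apply: iprod_subl; apply: ipow_ideal.
Qed.

Lemma red_trans I K L : is_ideal I -> is_ideal K -> is_ideal L -> psubset K L ->
  red I K -> red K L -> red I L.
Proof.
move=> hI hK hL sKL [p hp] [q hq]; exists (p + q)%N => x.
rewrite -addSn addnC => hx.
have := @red_pow _ _ _ hK hL hq p.+1 _ hx => {}hx.
have := iprod_mono (iprod_ideal _ hI) hp (fun y (hy : ipow L q y) => hy) hx => {}hx.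
have := iprod_assoc hI (ipow_ideal p hK) hx => {}hx.
have sp := ipow_mono (n:=p) hL sKL.
have := iprod_mono hI (fun y (hy : I y) => hy)
   (iprod_mono (ipow_ideal p hL) sp (fun y (hy : ipow L q y) => hy)) hx => {}hx.
exact: (iprod_mono hI (fun y (hy : I y) => hy) (ipow_add p q hL).2 hx).
Qed.

Definition addx K (x : R) : R -> Prop := fun y => exists k r, K k /\ y = k + r * x.

Lemma addx_ideal K x : is_ideal K -> is_ideal (addx K x).
Proof.
move=> hK; apply/idealP; split.
- by exists 0, 0; rewrite mul0r addr0; split => //; apply: ideal0.
- move=> y z [k [r [hk ->]]] [k' [r' [hk' ->]]]; exists (k + k'), (r + r').
  by split; [apply: idealD | rewrite mulrDl addrACA].
- move=> a y [k [r [hk ->]]]; exists (a * k), (a * r).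
  by split; [apply: ideal_mull | rewrite mulrDr mulrA].
Qed.

Lemma addx_sub K x : is_ideal K -> psubset K (addx K x).
Proof. by move=> hK y hy; exists y, 0; rewrite mul0r addr0. Qed.

Lemma addx_mem K x : is_ideal K -> addx K x x.
Proof. by move=> hK; exists 0, 1; rewrite mul1r add0r; split => //; apply: ideal0. Qed.

Section RedAdd.
Variables (K : R -> Prop) (x : R).
Hypothesis hK : is_ideal K.
Let L := addx K x.
Let hL : is_ideal L := addx_ideal x hK.
Let M (j : nat) : R -> Prop :=
  fun y => exists u s, iprod K (ipow L j) u /\ y = u + s * x ^+ j.+1.

Lemma M_ideal j : is_ideal (M j).
Proof.
have hP : is_ideal (iprod K (ipow L j)) by apply: iprod_ideal.
apply/idealP; split.
- by exists 0, 0; rewrite mul0r addr0; split => //; apply: ideal0.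
- move=> y z [u [r [hu ->]]] [u' [r' [hu' ->]]]; exists (u + u'), (r + r').
  by split; [apply: idealD | rewrite mulrDl addrACA].
- move=> a y [u [r [hu ->]]]; exists (a * u), (a * r).
  by split; [apply: ideal_mull | rewrite mulrDr mulrA].
Qed.

Lemma Lpow_M j : psubset (ipow L j.+1) (M j).
Proof.
elim: j => [|j IH].
  apply: iprod_least; first exact: M_ideal.
  move=> l w [k [r [hk ->]]] _; exists (k * w), (r * w); split.
    by rewrite -(mulr1 k) -mulrA; apply: iprod_mem.
  by rewrite expr1 mulrDl mulrAC.
have hxw : forall w, ipow L j.+1 w -> M j.+1 (x * w).
  move=> w /IH [u [s [hu ->]]]; exists (x * u), s; split; last first.
    by rewrite mulrDr mulrCA -exprS.
  have hQ : is_ideal (fun u => iprod K (ipow L j.+1) (x * u)).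
    by apply: mulrow_ideal; apply: iprod_ideal.
  apply: (iprod_least hQ _ hu) => k v hk hv /=.
  by rewrite mulrCA; apply: iprod_mem => //=; apply: iprod_mem => //; apply: addx_mem.
apply: iprod_least; first exact: M_ideal.
move=> l w [k [r [hk ->]]] hw; rewrite mulrDl; apply: idealD; first exact: M_ideal.
  exists (k * w), 0; rewrite mul0r addr0; split => //; exact: iprod_mem.
by rewrite -mulrA; apply: ideal_mull; [exact: M_ideal | exact: hxw].
Qed.

Lemma red_addx n (c : nat -> R) : (0 < n)%N ->
  (forall i, (1 <= i <= n)%N -> ipow K i (c i)) ->
  x ^+ n + \sum_(1 <= i < n.+1) c i * x ^+ (n - i) = 0 -> red K L.
Proof.
move=> n0 hc eq; exists n.-1.
have hT : is_ideal (iprod K (ipow L n.-1)) by apply: iprod_ideal.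
have hxn : iprod K (ipow L n.-1) (x ^+ n).
  have -> : x ^+ n = - \sum_(1 <= i < n.+1) c i * x ^+ (n - i).
    by apply/eqP; rewrite -addr_eq0 eq.
  apply: idealN => //; rewrite big_nat_cond; apply: ideal_big => // i /andP [/andP [h1 h2] _].
  have := hc i; rewrite h1 -ltnS h2 => /(_ isT).
  case: i h1 h2 => // i _ h2 /= hci.
  have hQ : is_ideal (fun u => iprod K (ipow L n.-1) (u * x ^+ (n - i.+1))).
    exact: mulcol_ideal.
  apply: (iprod_least hQ _ hci) => k v hk hv /=.
  rewrite -mulrA; apply: iprod_mem => //.
  have e : n.-1 = (i + (n - i.+1))%N.
    by rewrite ltnS in h2; lia.
  rewrite e; apply: (ipow_add i (n - i.+1) hL).2; apply: iprod_mem.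
    by apply: (ipow_mono (n:=i) hL (addx_sub x hK)).
  by apply: pow_mem; apply: addx_mem.
move=> y; rewrite prednK // => hy; have := @Lpow_M n.-1 y; rewrite prednK // => /(_ hy) [u [s [hu ->]]].
apply: idealD => //; apply: ideal_mull => //.
by rewrite prednK.
Qed.

End RedAdd.

Lemma int_closure_red K I x : is_ideal K -> psubset I K -> int_closure I x -> red K (addx K x).
Proof.
move=> hK sIK [n [c [n0 [hc eq]]]]; apply: (red_addx hK n0 _ eq).
by move=> i /hc; apply: ipow_mono.
Qed.

Fixpoint Kt I (s : seq R) (t : nat) : R -> Prop :=
  match t with 0%N => I | t'.+1 => addx (Kt I s t') s`_t' end.

Lemma Kt_ideal I s t : is_ideal I -> is_ideal (Kt I s t).
Proof. by move=> hI; elim: t => [|t IH] //=; apply: addx_ideal. Qed.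

Lemma Kt_mono I s t t' : is_ideal I -> (t <= t')%N -> psubset (Kt I s t) (Kt I s t').
Proof.
move=> hI; elim: t' => [|t' IH].
  by rewrite leqn0 => /eqP ->.
rewrite leq_eqVlt => /orP [/eqP ->|] //.
rewrite ltnS => /IH h y /h hy /=; apply: addx_sub => //; exact: Kt_ideal.
Qed.

Lemma Kt_mem I s t i : is_ideal I -> (i < t)%N -> Kt I s t s`_i.
Proof.
move=> hI hit; apply: (Kt_mono hI hit) => /=; apply: addx_mem; exact: Kt_ideal.
Qed.

Lemma Kt_red I s t : is_ideal I -> (forall i, (i < size s)%N -> int_closure I s`_i) ->
  red I (Kt I s t).
Proof.
move=> hI hs; elim: t => [|t IH] /=.
  by exists 0%N.
case: (ltnP t (size s)) => ht.
  apply: red_trans IH _ => //; try exact: Kt_ideal.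
  - by apply: addx_ideal; exact: Kt_ideal.
  - by apply: addx_sub; exact: Kt_ideal.
  apply: int_closure_red (hs _ ht); first exact: Kt_ideal.
  by apply: (Kt_mono (t:=0%N)).
(* beyond size s, s`_t = 0 *)
rewrite nth_default //.
apply: red_trans IH _ => //; try exact: Kt_ideal.
- by apply: addx_ideal; exact: Kt_ideal.
- by apply: addx_sub; exact: Kt_ideal.
exists 0%N => y /=.
apply: iprod_mono; [exact: Kt_ideal | | by []].
move=> z [k [r [hk ->]]]; rewrite mulr0 addr0 //.
Qed.

Lemma part1_powsub I J s : is_ideal I -> is_ideal J -> peq J (gen s) ->
  psubset J (int_closure I) ->
  exists c, forall n, psubset (ipow J (c + n)) (ipow I n).
Proof.
move=> hI hJ eJ sJ.
have hs : forall i, (i < size s)%N -> int_closure I s`_i.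
  move=> i hi; apply: sJ; apply/eJ.
  exists (fun j : 'I_(size s) => if val j == i then 1 else 0).
  rewrite (bigD1 (Ordinal hi)) //= eqxx mul1r big1 ?addr0 //.
  by move=> j /eqP hj; case: ifP => [/eqP e|]; [case: hj; apply: val_inj | rewrite mul0r].
have hK := Kt_ideal s (size s) hI.
have [c hc] := red_powsub hI hK (Kt_red (size s) hI hs).
exists c => n y hy; apply: hc.
apply: (ipow_mono hK _ hy) => z /eJ [d ->].
by apply: ideal_big => // i _; apply: ideal_mull => //; apply: Kt_mem.
Qed.

End Ideals.

Lemma int_lin (d k : int) (N : nat) :
  (forall n : nat, (N <= n)%N -> d * (n.+1)%:Z <= k) -> d <= 0.
Proof.
move=> h; have := h (N + `|k|)%N (leq_addr _ _).
case: (lerP d 0) => // hd H.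
have hk : k <= (`|k|%N)%:Z by rewrite abszE ler_norm.
have : (`|k|%N)%:Z < (N + `|k|).+1%:Z by rewrite ltz_nat ltnS leq_addl.
nia.
Qed.

Section Part1.
Variable R : comNzRingType.

Lemma colength_mono (A B : R -> Prop) l l' : is_ideal A -> is_ideal B -> psubset A B ->
  colength_is A l -> colength_is B l' -> (l' <= l)%N.
Proof.
move=> hA hB sAB hl hl'.
have [l1 [l2 [_ h2 <-]]] := qlength_add hA hB (unitideal_ideal R) sAB (fun _ _ => I) hl.
by rewrite (qlength_unique hl' h2) leq_addl.
Qed.

Lemma part1 (m : R -> Prop) : noetherian R ->
  forall (I J : R -> Prop) (a : R),
      m_primary m I -> m_primary m J -> I a -> reduction (principal a) I ->
      psubset I J -> psubset J (int_closure I) ->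
      forall e1I e1J : int, e1_is I e1I -> e1_is J e1J -> e1I <= e1J.
Proof.
move=> hN I J a [[hI _] _] [[hJ _] _] _ _ sIJ sJ e1I e1J [e0I [N1 hlI]] [e0J [N2 hlJ]].
have [s es] := hN J hJ.
have [c hc] := part1_powsub hI hJ es sJ.
have A : forall n, (N1 + N2 <= n)%N -> e0J * (n.+1)%:Z - e1J <= e0I * (n.+1)%:Z - e1I.
  move=> n hn.
  have [lI [hI1 eI]] := hlI n (leq_trans (leq_addr _ _) hn).
  have [lJ [hJ1 eJ]] := hlJ n (leq_trans (leq_addl _ _) hn).
  rewrite -eI -eJ lez_nat.
  apply: (colength_mono (ipow_ideal n.+1 hI) (ipow_ideal n.+1 hJ) _ hI1 hJ1).
  exact: ipow_mono.
have B : forall n, (N1 + N2 <= n)%N -> e0I * (n.+1)%:Z - e1I <= e0J * ((c + n)%N.+1)%:Z - e1J.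
  move=> n hn.
  have [lI [hI1 eI]] := hlI n (leq_trans (leq_addr _ _) hn).
  have [lJ [hJ1 eJ]] := hlJ (c + n)%N (leq_trans (leq_addl _ _) (leq_trans hn (leq_addl _ _))).
  rewrite -eI -eJ lez_nat.
  apply: (colength_mono (ipow_ideal (c + n).+1 hJ) (ipow_ideal n.+1 hI) _ hJ1 hI1).
  by rewrite -addnS; apply: hc.
have d1 : e0J - e0I <= 0.
  apply: (int_lin (k := e1J - e1I) (N := (N1 + N2)%N)) => n /A; lia.
have d2 : e0I - e0J <= 0.
  apply: (int_lin (k := e0J * c%:Z + e1I - e1J) (N := (N1 + N2)%N)) => n /B.
  rewrite -addnS PoszD mulrDr; nia.
have eq0 : e0J = e0I by lia.
have := A _ (leqnn _); rewrite eq0; lia.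
Qed.

End Part1.

Lemma nat_min (P : nat -> Prop) : (exists n, P n) ->
  exists n, P n /\ forall k, (k < n)%N -> ~ P k.
Proof.
move=> [n hn]; elim: n {-2}n (leqnn n) hn => [|N IH] n hn hP.
  by exists n; split => // k; rewrite leqn0 in hn; rewrite (eqP hn).
case: (classic (exists k, (k < n)%N /\ P k)) => [[k [hk hPk]]|hno].
  by apply: (IH k) => //; rewrite -ltnS; apply: leq_trans hn.
by exists n; split => // k hk hPk; apply: hno; exists k.
Qed.

Section DVR.
Variable R : comNzRingType.
Variable m : R -> Prop.
Hypothesis hN : noetherian R.
Hypothesis hloc : local_with m.

Lemma loc_ideal : is_ideal m. Proof. by case: hloc. Qed.
Lemma notm1 : ~ m 1. Proof. by case: hloc => _ []. Qed.

Lemma unit_of_notm w : ~ m w -> exists w', w * w' = 1.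
Proof.
move=> hw; case: (classic (principal w 1)) => [[r e]|h].
  by exists r; rewrite mulrC e.
case: hloc => _ [_ h3]; exfalso; apply: hw.
by apply: (h3 _ (principal_ideal w) h); exists 1; rewrite mul1r.
Qed.

Lemma one_sub_notm c : m c -> ~ m (1 - c).
Proof.
move=> hc h; apply: notm1; have -> : 1 = (1 - c) + c by rewrite subrK.
by apply: idealD => //; exact: loc_ideal.
Qed.

Variable y x : R.
Hypothesis hmy : peq m (principal y).
Hypothesis hmx : m x.
Hypothesis hxreg : forall z, x * z = 0 -> z = 0.

Lemma my : m y. Proof. by apply/hmy; exists 1; rewrite mul1r. Qed.

Lemma yreg z : y * z = 0 -> z = 0.
Proof.
have [r er] := (hmy x).1 hmx => h; apply: hxreg.
by rewrite er -mulrA h mulr0.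
Qed.

Lemma ypow_reg n z : y ^+ n * z = 0 -> z = 0.
Proof.
elim: n z => [|n IH] z; first by rewrite expr0 mul1r.
by rewrite exprS -mulrA => /yreg /IH.
Qed.

Lemma ypow_cancel n u v : y ^+ n * u = y ^+ n * v -> u = v.
Proof. by move=> h; apply/eqP; rewrite -subr_eq0; apply/eqP/(ypow_reg (n:=n)); rewrite mulrBr h subrr. Qed.

Lemma y_inter z : (forall n, exists w, z = w * y ^+ n) -> z = 0.
Proof.
move=> h.
pose zs n := proj1_sig (constructive_indefinite_description _ (h n)).
have ezs : forall n, z = zs n * y ^+ n.
  by move=> n; rewrite /zs; case: constructive_indefinite_description.
have rel : forall n, zs n = zs n.+1 * y.
  move=> n; apply: (@ypow_cancel n); rewrite mulrC -ezs mulrCA -exprSr -ezs //.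
have mono : forall n n', (n <= n')%N -> psubset (principal (zs n)) (principal (zs n')).
  move=> n n' hn; elim: n' hn => [|n' IH].
    by rewrite leqn0 => /eqP -> w.
  rewrite leq_eqVlt => /orP [/eqP -> w hw //|].
  rewrite ltnS => /IH hs w /hs [r ->].
  by exists (r * y); rewrite (rel n'); ring.
pose U w := exists n, principal (zs n) w.
have hU : is_ideal U.
  apply/idealP; split.
  - by exists 0%N; exists 0; rewrite mul0r.
  - move=> w w' [n hw] [n' hw']; exists (maxn n n').
    apply: idealD; first exact: principal_ideal.
      by apply: (mono n) => //; apply: leq_maxl.
    by apply: (mono n') => //; apply: leq_maxr.
  - by move=> b w [n hw]; exists n; apply: ideal_mull => //; exact: principal_ideal.
have [g eg] := hN hU.
have fin : forall k, (k <= size g)%N -> exists M, forall i, (i < k)%N -> principal (zs M) g`_i.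
  elim=> [|k IH] hk; first by exists 0%N.
  have [M hM] := IH (ltnW hk).
  have : U g`_k.
    apply/eg; exists (fun j : 'I_(size g) => if val j == k then 1 else 0).
    rewrite (bigD1 (Ordinal hk)) //= eqxx mul1r big1 ?addr0 //.
    by move=> j /eqP hj; case: ifP => [/eqP e|]; [case: hj; apply: val_inj | rewrite mul0r].
  move=> [n hn]; exists (maxn M n) => i; rewrite ltnS leq_eqVlt => /orP [/eqP ->|hi].
    by apply: (mono n) => //; apply: leq_maxr.
  by apply: (mono M) => //; [apply: leq_maxl | apply: hM].
have [M hM] := fin _ (leqnn _).
have : principal (zs M) (zs M.+1).
  have /eg [c ->] : U (zs M.+1) by exists M.+1; exists 1; rewrite mul1r.
  apply: ideal_big => //; first exact: principal_ideal.
  by move=> i _; apply: ideal_mull; [exact: principal_ideal | apply: hM].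
move=> [c ec].
have h0 : zs M.+1 * (1 - c * y) = 0.
  by rewrite mulrBr mulr1 mulrA (mulrC _ c) -mulrA -rel -ec subrr.
have [w' hw'] : exists w', (1 - c * y) * w' = 1.
  apply: unit_of_notm; apply: one_sub_notm; apply: ideal_mull; [exact: loc_ideal | exact: my].
have : zs M.+1 = 0 by rewrite -[zs _]mulr1 -hw' mulrA h0 mul0r.
by move=> e; rewrite (ezs M.+1) e mul0r.
Qed.

Lemma y_factor z : z != 0 -> exists n u w', z = u * y ^+ n /\ u * w' = 1.
Proof.
move=> hz.
have [n [hPn hmin]] : exists n, (~ exists w, z = w * y ^+ n) /\
    forall k, (k < n)%N -> ~ ~ exists w, z = w * y ^+ k.
  apply: nat_min; apply: NNPP => hno; move: hz.
  have -> : z = 0 by apply: y_inter => n; apply: NNPP => h; apply: hno; exists n.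
  by rewrite eqxx.
case: n hPn hmin => [|n] hPn hmin.
  by exfalso; apply: hPn; exists z; rewrite expr0 mulr1.
have [u eu] := NNPP _ (hmin n (ltnSn n)).
have hu : ~ m u.
  by move=> /hmy [r er]; apply: hPn; exists r; rewrite eu er exprSr; ring.
have [w' hw'] := unit_of_notm hu.
by exists n, u, w'.
Qed.

Lemma dvr_of_principal : is_dvr R.
Proof.
have hy1 : y != 0.
  apply/eqP => y0; have := @yreg 1; rewrite y0 mul0r => /(_ erefl) /eqP.
  by rewrite oner_eq0.
split; [|split].
- move=> p q hpq; apply: NNPP => hn.
  have hp : p != 0 by apply/eqP => e; apply: hn; left.
  have hq : q != 0 by apply/eqP => e; apply: hn; right.
  have [n [u [u' [eu hu]]]] := y_factor hp.
  have [k [v [v' [ev hv]]]] := y_factor hq.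
  have : y ^+ (n + k) * 1 = 0.
    have e : (p * q) * (u' * v') = y ^+ (n + k) * 1.
      rewrite eu ev exprD; transitivity ((u * u') * (v * v') * (y ^+ n * y ^+ k)); first ring.
      by rewrite hu hv; ring.
    by rewrite -e hpq mul0r.
  by move=> /ypow_reg /eqP; rewrite oner_eq0.
- move=> I hI.
  case: (classic (exists w, I w /\ w != 0)) => [[w [hw hw0]]|hno]; last first.
    exists 0 => z; split.
      move=> hz; exists 0; rewrite mul0r; apply: NNPP => hz0; apply: hno; exists z.
      by split => //; apply/eqP.
    by move=> [r ->]; rewrite mulr0; apply: ideal0.
  have [n0 [hn0 hmin]] : exists n, I (y ^+ n) /\ forall k, (k < n)%N -> ~ I (y ^+ k).
    apply: nat_min; have [n [u [u' [eu hu]]]] := y_factor hw0.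
    exists n; have -> : y ^+ n = u' * w by rewrite eu mulrA (mulrC u') hu mul1r.
    exact: ideal_mull.
  exists (y ^+ n0) => z; split; last by move=> [r ->]; apply: ideal_mull.
  move=> hz; case: (eqVneq z 0) => [->|hz0]; first by exists 0; rewrite mul0r.
  have [k [u [u' [eu hu]]]] := y_factor hz0.
  have hk : I (y ^+ k).
    have -> : y ^+ k = u' * z by rewrite eu mulrA (mulrC u') hu mul1r.
    exact: ideal_mull.
  have hnk : (n0 <= k)%N by rewrite leqNgt; apply/negP => /hmin.
  by exists (u * y ^+ (k - n0)); rewrite eu -mulrA -exprD subnK.
- exists y; split => // [[w hw]]; apply: notm1; rewrite -hw.
  by apply: ideal_mulr; [exact: loc_ideal | exact: my].
Qed.

End DVR.

Section Part2.
Variable R : comNzRingType.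
Variable m : R -> Prop.
Hypothesis hN : noetherian R.
Hypothesis hloc : local_with m.

Lemma gen_nil (w : R) : gen [::] w <-> w = 0.
Proof.
split; first by move=> [c ->]; rewrite big_ord0.
by move=> ->; exists (fun _ => 0); rewrite big_ord0.
Qed.

Lemma regular_elt : krull_dim_is R 1 -> cohen_macaulay m ->
  exists x, m x /\ forall z, x * z = 0 -> z = 0.
Proof.
move=> [[f1 hf1] b1] [d [[[f hf] b] [[s [hs hreg]] _]]].
have d1 : d = 1%N by apply/eqP; rewrite eqn_leq (b1 _ _ hf) (b _ _ hf1).
move: hs hreg; rewrite d1; case: s => [|x [|? ?]] //= _ [hm hr _].
exists x; split; first by apply: hm; rewrite inE.
move=> z hz; have := hr 0%N isT z; rewrite /= => /(_ _).
by move=> h; apply/gen_nil/h/gen_nil.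
Qed.

Variables (x : R) (a : R) (xs : seq R).
Hypothesis hx : m x.
Hypothesis hxreg : forall z, x * z = 0 -> z = 0.
Hypothesis ha : m a.
Hypothesis hrad : peq (radical (principal a)) m.
Hypothesis hmg : peq m (gen xs).
Hypothesis notdvr : ~ is_dvr R.

Lemma mI : is_ideal m. Proof. by case: hloc. Qed.

Lemma pow_reg (b : R) n z : (forall z, b * z = 0 -> z = 0) -> b ^+ n * z = 0 -> z = 0.
Proof.
move=> hb; elim: n z => [|n IH] z; first by rewrite expr0 mul1r.
by rewrite exprS -mulrA => /hb /IH.
Qed.

Lemma a_reg z : a * z = 0 -> z = 0.
Proof.
move=> h; have [n [r er]] := (hrad x).2 hx.
by apply: (@pow_reg x n) => //; rewrite er -mulrA h mulr0.
Qed.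

Lemma a_cancel u v : a * u = a * v -> u = v.
Proof. by move=> h; apply/eqP; rewrite -subr_eq0; apply/eqP/a_reg; rewrite mulrBr h subrr. Qed.

Lemma apow_cancel n u v : a ^+ n * u = a ^+ n * v -> u = v.
Proof.
move=> h; apply/eqP; rewrite -subr_eq0; apply/eqP.
by apply: (@pow_reg a n); [exact: a_reg | rewrite mulrBr h subrr].
Qed.

Lemma not_principal_m y : ~ peq m (principal y).
Proof. by move=> hy; apply: notdvr; apply: (dvr_of_principal hN hloc hy hx hxreg). Qed.

Definition Icol := colon (principal a) m.

Lemma Icol_ideal : is_ideal Icol.
Proof.
apply/idealP; split.
- by move=> y _; exists 0; rewrite !mul0r.
- by move=> u v hu hv y hy; rewrite mulrDl; apply: idealD; [exact: principal_ideal| auto | auto].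
- by move=> b u hu y hy; rewrite -mulrA; apply: ideal_mull; [exact: principal_ideal| auto].
Qed.

Lemma aI : psubset (principal a) Icol.
Proof. by move=> u [r ->] y _; exists (r * y); ring. Qed.

Lemma Icol_m : psubset Icol m.
Proof.
case: (classic (Icol 1)) => [h1|h1].
  exfalso; apply: (@not_principal_m a) => z; split.
    by move=> hz; have := h1 z hz; rewrite mul1r.
  by move=> [r ->]; apply: ideal_mull => //; exact: mI.
by case: hloc => _ [_ h]; apply: h => //; exact: Icol_ideal.
Qed.

Lemma Icol_sq u v : Icol u -> Icol v -> exists t, Icol t /\ u * v = a * t.
Proof.
move=> hu hv.
case: (classic (forall w z, Icol w -> m z -> exists t, m t /\ w * z = a * t)) => [hA|hB].
  have [t et] := hu v (Icol_m hv).
  exists t; split; last by rewrite et mulrC.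
  move=> z hz.
  have [w [hw ew]] := hA v z hv hz.
  have [s es] := hu w hw.
  exists s; apply: a_cancel.
  have -> : a * (t * z) = u * (v * z) by rewrite (mulrA u) et; ring.
  by rewrite ew mulrCA es.
exfalso.
have [w [z [hw [hz hn]]]] : exists w z, Icol w /\ m z /\ ~ exists t, m t /\ w * z = a * t.
  apply: NNPP => h; apply: hB => w z hw hz; apply: NNPP => h'; apply: h.
  by exists w, z.
have [r er] := hw z hz.
have hr : ~ m r by move=> hr; apply: hn; exists r; split => //; rewrite er mulrC.
have [r' hr'] := unit_of_notm hloc hr.
apply: (@not_principal_m (z * r')) => q; split; last first.
  by move=> [c ->]; apply: ideal_mull; [exact: mI | apply: ideal_mulr => //; exact: mI].
move=> hq; have [s es] := hw q hq; exists s.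
apply: a_cancel.
have ea : a = w * (z * r').
  by rewrite mulrA er; transitivity (a * (r * r')); [rewrite hr' mulr1 | ring].
by rewrite {1}ea -mulrA mulrCA es; ring.
Qed.

Definition AI n : R -> Prop := fun w => exists z, Icol z /\ w = a ^+ n * z.

Lemma AI_ideal n : is_ideal (AI n).
Proof.
apply/idealP; split.
- by exists 0; rewrite mulr0; split => //; exact: (ideal0 Icol_ideal).
- move=> u v [z [hz ->]] [z' [hz' ->]]; exists (z + z'); split; last by rewrite mulrDr.
  exact: (idealD Icol_ideal hz hz').
- move=> b u [z [hz ->]]; exists (b * z); split; last by rewrite mulrCA.
  exact: (ideal_mull b Icol_ideal hz).
Qed.

Lemma ipow_AI n : peq (ipow Icol n.+1) (AI n).
Proof.
have hI := Icol_ideal.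
elim: n => [|n IH] w.
  split.
    move=> /(iprod_subl hI) hw; exists w; split => //; rewrite expr0 mul1r //.
  by move=> [z [hz ->]]; rewrite expr0 mul1r; apply: iprod_unitr.
split.
  move=> hw.
  have : iprod Icol (AI n) w.
    apply: (iprod_mono hI (fun y (hy : Icol y) => hy) _ hw) => v /IH //.
  apply: iprod_least; first exact: AI_ideal.
  move=> i v hi [z [hz ->]].
  have [t [ht et]] := Icol_sq hi hz.
  by exists t; split => //; rewrite mulrCA et mulrA -exprSr.
move=> [z [hz ->]]; rewrite exprS -mulrA.
apply: (iprod_mono hI (fun y (hy : Icol y) => hy) (fun v (hv : AI n v) => (IH v).2 hv)).
apply: iprod_mem; first by apply: aI; exists 1; rewrite mul1r.
by exists z.
Qed.

Lemma qlength_peq (V : lmodType R) (X Y X' Y' : V -> Prop) l :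
  peq X X' -> peq Y Y' -> qlength_is X Y l -> qlength_is X' Y' l.
Proof.
move=> e1 e2 [[f hf] b]; split; first by exists f; apply: chain_peq hf _ _.
move=> g k hg; apply: (b g k); apply: chain_peq hg _ _ => z; split.
- by move=> /e1.
- by move=> /e1.
- by move=> /e2.
- by move=> /e2.
Qed.

Definition mulset (c : R) (P : R -> Prop) : R -> Prop := fun w => exists z, P z /\ w = c * z.

Lemma mul_transport (c : R) (A B : R -> Prop) l : (forall z, c * z = 0 -> z = 0) ->
  is_ideal A -> is_ideal B -> psubset A B ->
  qlength_is (V := R^o) A B l <-> qlength_is (V := R^o) (mulset c A) (mulset c B) l.
Proof.
move=> creg hA hB sAB.
have ccan : forall u v, c * u = c * v -> u = v.
  move=> u v h; apply/eqP; rewrite -subr_eq0; apply/eqP/creg; by rewrite mulrBr h subrr.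
have hB' : is_ideal (mulset c B).
  apply/idealP; split.
  - by exists 0; rewrite mulr0; split => //; apply: ideal0.
  - move=> u v [z [hz ->]] [z' [hz' ->]]; exists (z + z'); split; last by rewrite mulrDr.
    exact: idealD.
  - move=> b u [z [hz ->]]; exists (b * z); split; last by rewrite mulrCA.
    exact: ideal_mull.
have sAB' : psubset (mulset c A) (mulset c B) by move=> w [z [hz ->]]; exists z; split => //; apply: sAB.
have fD : forall u v : R^o, c * (u + v) = c * u + c * v by move=> u v; rewrite mulrDr.
have fZ : forall (b : R) (u : R^o), (c * (b *: u) : R^o) = b *: (c * u : R^o).
  by move=> b u; rewrite /GRing.scale /= mulrCA.
have finj : forall u v : R^o, B u -> B v -> c * u = c * v -> u = v by move=> u v _ _; apply: ccan.
have fsurj : forall w : R^o, mulset c B w -> exists u : R^o, B u /\ c * u = w.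
  by move=> w [z [hz ->]]; exists z.
have fimg : forall u : R^o, B u -> mulset c B (c * u) by move=> u hu; exists u.
have fA : forall u : R^o, B u -> A u <-> mulset c A (c * u).
  move=> u hu; split; first by move=> h; exists u.
  by move=> [z [hz /ccan ->]].
split.
- exact: (@qlength_transport' _ _ _ (fun u : R^o => (c * u : R^o)) fD fZ _ _ _ _ hB sAB sAB' finj fsurj fimg fA).
- exact: (@qlength_transport _ _ _ (fun u : R^o => (c * u : R^o)) fD fZ _ _ _ _ hB sAB sAB' finj fsurj fimg fA).
Qed.

Definition PA (j : nat) := principal (a ^+ j).

Lemma PA_ideal j : is_ideal (PA j). Proof. exact: principal_ideal. Qed.

Lemma PA_mulset j : peq (PA j) (mulset (a ^+ j) (@unitideal R)).
Proof. by move=> w; split => [[r ->]|[z [_ ->]]]; [exists r; rewrite mulrC | exists z; rewrite mulrC]. Qed.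

Lemma PAS_mulset j : peq (PA j.+1) (mulset (a ^+ j) (PA 1)).
Proof.
move=> w; split => [[r ->]|[z [[r ->] ->]]].
  by exists (r * a); split; [exists r; rewrite expr1 | rewrite exprSr; ring].
by exists r; rewrite expr1 exprSr; ring.
Qed.

Lemma PA1 : peq (PA 1) (principal a).
Proof. by move=> w; rewrite /PA expr1. Qed.

Lemma PA0 : peq (PA 0) (@unitideal R).
Proof. by move=> w; split => // _; exists w; rewrite expr0 mulr1. Qed.

Lemma PA_sub j j' : (j <= j')%N -> psubset (PA j') (PA j).
Proof.
move=> h w [r ->]; exists (r * a ^+ (j' - j)); rewrite -mulrA -exprD subnK //.
Qed.

Lemma AI_PA n j : (j <= n)%N -> psubset (AI n) (PA j).
Proof.
move=> h w [z [_ ->]]; apply: (PA_sub h); exists z; rewrite mulrC //.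
Qed.

Lemma len_AI n l : (1 <= n)%N -> qlength_is (V := R^o) (AI n) (@unitideal R) l ->
  exists q t s, [/\ qlength_is (V := R^o) (principal a) (@unitideal R) q,
    qlength_is (V := R^o) Icol (@unitideal R) t,
    qlength_is (V := R^o) (principal a) Icol s,
    q = (s + t)%N & l = (n * q + t)%N].
Proof.
move=> n1 hl.
have hU := unitideal_ideal R.
have hAI := AI_ideal n.
have hI := Icol_ideal.
have [l1 [q [_ hq _]]] := qlength_add hAI (PA_ideal 1) hU (AI_PA n1) (fun _ _ => I) hl.
have hq' : qlength_is (V := R^o) (principal a) (@unitideal R) q.
  by apply: qlength_peq hq => // w; apply: PA1.
have P : forall j, (j <= n)%N -> exists L, qlength_is (V := R^o) (AI n) (PA j) L /\ (L + j * q)%N = l.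
  elim=> [|j IH] hj.
    exists l; split; last by rewrite mul0n addn0.
    by apply: qlength_peq hl => // w; split => [/PA0|/PA0].
  have [L [hL eL]] := IH (ltnW hj).
  have [L1 [L2 [h1 h2 e12]]] := qlength_add hAI (PA_ideal j.+1) (PA_ideal j) (AI_PA hj)
      (PA_sub (leqnSn j)) hL.
  exists L1; split => //.
  have h2' := qlength_peq (V := R^o) (PAS_mulset j) (PA_mulset j) h2.
  have hreg : forall z, a ^+ j * z = 0 -> z = 0 by move=> z; apply: pow_reg; exact: a_reg.
  have := (@mul_transport _ _ _ L2 hreg (PA_ideal 1) hU (fun _ _ => I)).2 h2' => h3.
  rewrite (qlength_unique h3 hq) in e12.
  by rewrite -eL -e12 mulSn addnA.
have [L [hL eL]] := P n (leqnn n).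
have hreg : forall z, a ^+ n * z = 0 -> z = 0 by move=> z; apply: pow_reg; exact: a_reg.
have hL' := qlength_peq (V := R^o) (fun w => conj (@id (AI n w)) (@id _)) (PA_mulset n) hL.
have ht := (@mul_transport _ _ _ L hreg hI hU (fun _ _ => I)).2 hL'.
have [s [t' [hs ht' est]]] := qlength_add (principal_ideal a) hI hU aI (fun _ _ => I) hq'.
exists q, L, s; split => //.
- by rewrite -est (qlength_unique ht' ht).
- by rewrite -eL addnC mulnC.
Qed.

Lemma sum_delta k (i : 'I_k) (F : 'I_k -> R) : \sum_l ((l == i)%:R * F l) = F i.
Proof.
rewrite (bigD1 i) //= eqxx mul1r big1 ?addr0 // => l /negbTE ->; by rewrite mul0r.
Qed.

Lemma gen_mem i : (i < size xs)%N -> gen xs xs`_i.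
Proof.
move=> hi; exists (fun j : 'I_(size xs) => (j == Ordinal hi)%:R).
by rewrite (sum_delta (Ordinal hi) (fun l => xs`_l)).
Qed.

Let k := size xs.
Let V := 'rV[R]_k.

Lemma cycles_submod : submod (ext1_cycles (xs:=xs)).
Proof.
split.
- by move=> c _; apply: big1 => i _; rewrite mxE mulr0.
- move=> y y' hy hy' c hc; rewrite (eq_bigr (fun i => c 0 i * y 0 i + c 0 i * y' 0 i)).
    by rewrite big_split /= hy // hy' // addr0.
  by move=> i _; rewrite mxE mulrDr.
- move=> b y hy c hc; rewrite (eq_bigr (fun i => b * (c 0 i * y 0 i))).
    by rewrite -mulr_sumr hy // mulr0.
  by move=> i _; rewrite mxE mulrCA.
Qed.

Lemma bounds_cycles : psubset (ext1_bounds (xs:=xs)) (ext1_cycles (xs:=xs)).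
Proof.
move=> y [r hr] c hc; rewrite (eq_bigr (fun i => r * (c 0 i * xs`_i))).
  by rewrite -mulr_sumr hc mulr0.
by move=> i _; rewrite hr mulrCA.
Qed.

Lemma koszul y : ext1_cycles (xs:=xs) y -> forall i j : 'I_k,
  y 0 i * xs`_j = y 0 j * xs`_i.
Proof.
move=> hy i j.
pose c : 'rV[R]_k := \row_l ((l == i)%:R * xs`_j - (l == j)%:R * xs`_i).
have hc : \sum_(l < k) c 0 l * xs`_l = 0.
  rewrite (eq_bigr (fun l => (l == i)%:R * (xs`_j * xs`_l) - (l == j)%:R * (xs`_i * xs`_l))).
    rewrite sumrB (sum_delta i (fun l => xs`_j * xs`_l)) (sum_delta j (fun l => xs`_i * xs`_l)).
    by rewrite mulrC subrr.
  by move=> l _; rewrite mxE mulrBl !mulrA.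
have := hy c hc.
rewrite (eq_bigr (fun l => (l == i)%:R * (xs`_j * y 0 l) - (l == j)%:R * (xs`_i * y 0 l))).
  rewrite sumrB (sum_delta i (fun l => xs`_j * y 0 l)) (sum_delta j (fun l => xs`_i * y 0 l)).
  by move=> /eqP; rewrite subr_eq0 => /eqP; rewrite mulrC (mulrC xs`_i).
by move=> l _; rewrite mxE mulrBl !mulrA.
Qed.

Section ExtSec.
Variable r : 'I_k -> R.
Hypothesis har : a = \sum_(i < k) r i * xs`_i.

Definition fext (y : V) : R := \sum_(i < k) r i * y 0 i.

Lemma fext_key y : ext1_cycles (xs:=xs) y -> forall j : 'I_k, fext y * xs`_j = a * y 0 j.
Proof.
move=> hy j; rewrite /fext mulr_suml har mulr_suml; apply: eq_bigr => i _.
by rewrite -mulrA (koszul hy i j) mulrA mulrAC.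
Qed.

Lemma ext_length s : qlength_is (V := R^o) (principal a) Icol s -> cm_type_is xs s.
Proof.
move=> hs.
have fD : forall y y' : V, (fext (y + y') : R^o) = (fext y : R^o) + (fext y' : R^o).
  move=> y y'; rewrite /fext -big_split; apply: eq_bigr => i _; by rewrite mxE mulrDr.
have fZ : forall (b : R) (y : V), (fext (b *: y) : R^o) = b *: (fext y : R^o).
  move=> b y; rewrite /fext /GRing.scale /= mulr_sumr; apply: eq_bigr => i _.
  by rewrite mxE mulrCA.
have finj : forall y y' : V, ext1_cycles (xs:=xs) y -> ext1_cycles (xs:=xs) y' -> fext y = fext y' -> y = y'.
  move=> y y' hy hy' e; apply/rowP => j; apply: a_cancel.
  by rewrite -!fext_key // e.
have fimg : forall y : V, ext1_cycles (xs:=xs) y -> Icol (fext y).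
  move=> y hy v /hmg [d ->]; exists (\sum_(j < size xs) d j * y 0 j).
  rewrite mulr_sumr mulr_suml; apply: eq_bigr => j _.
  by rewrite mulrCA fext_key // mulrCA mulrC.
have fsurj : forall w : R^o, Icol w -> exists y : V, ext1_cycles (xs:=xs) y /\ (fext y : R^o) = w.
  move=> w hw.
  have h : forall j : 'I_k, exists q, w * xs`_j = q * a.
    by move=> j; apply: hw; apply/hmg; apply: gen_mem.
  pose yv j := proj1_sig (constructive_indefinite_description _ (h j)).
  have hyv : forall j : 'I_k, w * xs`_j = yv j * a.
    by move=> j; rewrite /yv; case: constructive_indefinite_description.
  exists (\row_j yv j); split.
    move=> c hc; apply: a_reg; rewrite mulr_sumr.
    rewrite (eq_bigr (fun j => w * (c 0 j * xs`_j))); first by rewrite -mulr_sumr hc mulr0.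
    by move=> j _; rewrite mxE [w * _]mulrCA hyv; ring.
  apply: a_cancel; rewrite /fext mulr_sumr [RHS]mulrC [in RHS]har mulr_sumr.
  by apply: eq_bigr => j _; rewrite mxE [w * _]mulrCA hyv; ring.
have fA : forall y : V, ext1_cycles (xs:=xs) y -> (ext1_bounds (xs:=xs) y <-> principal a (fext y)).
  move=> y hy; split.
    move=> [q hq]; exists q; rewrite /fext har mulr_sumr; apply: eq_bigr => i _.
    by rewrite hq mulrCA.
  move=> [q hq]; exists q => j; apply: a_cancel.
  by rewrite -fext_key // hq mulrAC mulrC mulrA.
exact: (@qlength_transport _ V R^o (fun y => (fext y : R^o)) fD fZ _ _ _ _ cycles_submod bounds_cycles aI
  finj fsurj fimg fA s hs).
Qed.

End ExtSec.

Lemma part2_main e : e1_is Icol e -> exists t : nat, cm_type_is xs t /\ e = t%:Z.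
Proof.
move=> [e0 [N h]].
have hI := Icol_ideal.
have get : forall n, (N <= n)%N -> (1 <= n)%N -> exists q t s,
   [/\ qlength_is (V := R^o) (principal a) (@unitideal R) q,
    qlength_is (V := R^o) Icol (@unitideal R) t,
    qlength_is (V := R^o) (principal a) Icol s,
    q = (s + t)%N & e0 * (n.+1)%:Z - e = (n * q + t)%N%:Z].
  move=> n hn n1; have [l [hl el]] := h n hn.
  have hl' : qlength_is (V := R^o) (AI n) (@unitideal R) l.
    by apply: qlength_peq hl => // w; apply: ipow_AI.
  have [q [t [s [hq ht hs eq el']]]] := len_AI n1 hl'.
  by exists q, t, s; split => //; rewrite -el el'.
have [q [t [s [hq ht hs eq e1]]]] := get (N + 1)%N (leq_addr _ _) (leq_addl N 1).
have [q' [t' [s' [hq' ht' hs' eq' e2]]]] := get (N + 2)%N (leq_addr _ _) (leq_trans (isT : (0 < 2)%N) (leq_addl N 2)).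
rewrite (qlength_unique hq' hq) (qlength_unique ht' ht) in e2.
have [rr har] : gen xs a by apply/hmg.
exists s; split; first exact: (ext_length har hs).
move: e1 e2; rewrite eq; rewrite !PoszD !PoszM.
have -> : (N + 2)%N = (N + 1).+1%N by rewrite addnS.
rewrite -!addnS !PoszD.
move: (N%:Z) (s%:Z) (t%:Z) => Nz sz tz e1 e2.
have E : e0 = sz + tz by nia.
rewrite E in e1; nia.
Qed.

End Part2.

End Aux.
Import Aux.

Theorem corollary2p5 (R : comNzRingType) (m : R -> Prop) :
  noetherian R -> local_with m -> krull_dim_is R 1 -> cohen_macaulay m ->
  (* (1) *)
  (forall (I J : R -> Prop) (a : R),
      m_primary m I -> m_primary m J -> I a -> reduction (principal a) I ->
      psubset I J -> psubset J (int_closure I) ->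
      forall e1I e1J : int, e1_is I e1I -> e1_is J e1J -> e1I <= e1J) /\
  (* (2) *)
  (~ is_dvr R ->
   forall a : R, m a -> m_primary m (principal a) ->
   forall xs : seq R, peq m (gen xs) ->
   forall e : int, e1_is (colon (principal a) m) e ->
   exists t : nat, cm_type_is xs t /\ e = t%:Z).
Proof.
move=> hN hloc hK hCM; split; first exact: part1.
move=> notdvr a ha [_ hrad] xs hmg e he.
have [x [hx hxreg]] := regular_elt hK hCM.
exact: (part2_main hN hloc hx hxreg ha hrad hmg notdvr he).
Qed.
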